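(* Let $X\subset\mathbb{R}^2$ be a finite set and let $w$ be a point in the interior of $\mathrm{conv}(X)$ which lies on a vertex or an edge of the farthest point Voronoi diagram of $X$. Then there exists a finite collection of points $X'$ such that $\mathrm{conv}(X)$ and $\mathrm{conv}(X')$ have the same extreme points and the quadratic min-power centre of $X'$ is $w$.
   Context: For a finite collection $Y=\{y_j:j\in J\}$ of points in the plane, its quadratic min-power centre is the unique minimiser of $P(s)=\sum_{j\in J}\|s-y_j\|^2+\max_{j\in J}\|s-y_j\|^2$. The farthest point Voronoi diagram of $X$ partitions the plane into the regions $V(x)=\{s:\|s-x\|=\max_{y\in X}\|s-y\|\}$, $x\in X$; its edges and vertices are the one- and zero-dimensional parts of the boundaries between these regions. In this paper a collection of nodes may contain coincident points (several nodes at the same location, each counted in the sum). *)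

(* Defs.v *)
From HB Require Import structures.
From mathcomp Require Import all_boot all_order all_algebra.
Set Implicit Arguments. Unset Strict Implicit. Unset Printing Implicit Defensive.
Import Order.TTheory GRing.Theory Num.Theory.
Local Open Scope ring_scope.

Section Plane.
Variable R : realFieldType.

Definition pt := (R * R)%type.

Definition sqdist (p q : pt) : R := (p.1 - q.1) ^+ 2 + (p.2 - q.2) ^+ 2.

Definition in_conv (s : seq pt) (p : pt) : Prop :=
  exists l : 'I_(size s) -> R,
    (forall i, 0 <= l i) /\ \sum_(i < size s) l i = 1 /\
    p.1 = \sum_(i < size s) l i * (nth p s i).1 /\
    p.2 = \sum_(i < size s) l i * (nth p s i).2.

Definition in_interior_conv (s : seq pt) (p : pt) : Prop :=
  exists e : R, 0 < e /\ forall q : pt, sqdist p q < e ^+ 2 -> in_conv s q.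

Definition extreme_point (s : seq pt) (p : pt) : Prop :=
  in_conv s p /\
  forall (a b : pt) (t : R), in_conv s a -> in_conv s b -> 0 < t -> t < 1 ->
    p = ((1 - t) * a.1 + t * b.1, (1 - t) * a.2 + t * b.2) -> a = p /\ b = p.

Definition fpv_region (X : seq pt) (x s : pt) : Prop :=
  forall y, y \in X -> sqdist s y <= sqdist s x.

(* s lies on a vertex or an edge of the farthest point Voronoi diagram of X,
   i.e. on the boundary between (at least) two distinct regions *)
Definition on_fpvd (X : seq pt) (s : pt) : Prop :=
  exists x y, [/\ x \in X, y \in X, x != y, fpv_region X x s & fpv_region X y s].

Definition min_power (Y : seq pt) (s : pt) : R :=
  \sum_(y <- Y) sqdist s y + \big[Num.max/0]_(y <- Y) sqdist s y.

Definition qmp_centre (Y : seq pt) (c : pt) : Prop :=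
  forall s : pt, s != c -> min_power Y c < min_power Y s.

End Plane.

(* Main.v *)
Require Import Defs.
From HB Require Import structures.
From mathcomp Require Import all_boot all_order all_algebra.
From mathcomp Require Import reals ring lra.
Import Order.TTheory GRing.Theory Num.Theory.
Local Open Scope ring_scope.

Lemma conv_cons (R : realFieldType) (s : seq (pt R)) (z q : pt R) :
  in_conv s z -> (in_conv (z :: s) q <-> in_conv s q).
Proof.
move=> [mu [mu0 [mu1 [z1 z2]]]]; split.
- move=> [l [l0 [l1 [q1 q2]]]].
  rewrite /= big_ord_recl in l1.
  rewrite /= big_ord_recl in q1.
  rewrite /= big_ord_recl in q2.
  have En : forall i : 'I_(size s), nth q (z :: s) (lift ord0 i) = nth q s i.
    by move=> i; rewrite lift0.
  have Ez : forall i : 'I_(size s), nth z s i = nth q s i.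
    by move=> i; apply: set_nth_default.
  exists (fun i => l (lift ord0 i) + l ord0 * mu i); split; [|split; [|split]].
  + by move=> i; apply: addr_ge0 => //; apply: mulr_ge0.
  + by rewrite big_split /= -mulr_sumr mu1 mulr1 addrC.
  + rewrite q1 /= z1 mulr_sumr -big_split /=; apply: eq_bigr => i _.
    by rewrite Ez add0n; ring.
  + rewrite q2 /= z2 mulr_sumr -big_split /=; apply: eq_bigr => i _.
    by rewrite Ez add0n; ring.
- move=> [l [l0 [l1 [q1 q2]]]].
  exists (fun j => oapp l 0 (unlift ord0 j)); split; [|split; [|split]].
  + by move=> j; case: (unlift ord0 j) => //= i.
  + rewrite /= big_ord_recl unlift_none /= add0r -l1.
    by apply: eq_bigr => i _; rewrite liftK.
  + rewrite /= big_ord_recl unlift_none /= mul0r add0r q1.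
    by apply: eq_bigr => i _; rewrite liftK /= add0n.
  + rewrite /= big_ord_recl unlift_none /= mul0r add0r q2.
    by apply: eq_bigr => i _; rewrite liftK /= add0n.
Qed.

Lemma conv_ncons (R : realFieldType) (s : seq (pt R)) (z : pt R) k :
  in_conv s z -> forall q, in_conv (ncons k z s) q <-> in_conv s q.
Proof.
move=> hz; elim: k => [|k IH] q //=.
rewrite (@conv_cons _ _ z q (proj2 (IH z) hz)).
exact: IH.
Qed.

Lemma extreme_eq (R : realFieldType) (A B : seq (pt R)) :
  (forall q, in_conv A q <-> in_conv B q) ->
  forall p, extreme_point A p <-> extreme_point B p.
Proof.
move=> E p; split=> [[h1 h2]|[h1 h2]]; split.
- by apply/E.
- by move=> a b t ha hb; apply: h2; apply/E.
- by apply/E.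
- by move=> a b t ha hb; apply: h2; apply/E.
Qed.
Lemma sum_sqdist (R : realFieldType) (p : pt R) (L : seq (pt R)) :
  \sum_(y <- L) sqdist p y =
  (size L)%:R * (p.1 ^+ 2 + p.2 ^+ 2) - 2 * p.1 * \sum_(y <- L) y.1
  - 2 * p.2 * \sum_(y <- L) y.2 + \sum_(y <- L) (y.1 ^+ 2 + y.2 ^+ 2).
Proof.
elim: L => [|a L IH]; first by rewrite !big_nil /=; ring.
rewrite !big_cons IH /= mulrS /sqdist; ring.
Qed.

Lemma sum_ncons (R : realFieldType) (f : pt R -> R) k z (L : seq (pt R)) :
  \sum_(y <- ncons k z L) f y = k%:R * f z + \sum_(y <- L) f y.
Proof.
elim: k => [|k IH] /=; first by rewrite mul0r add0r.
by rewrite big_cons IH mulrS; ring.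
Qed.

Lemma sum_const_in (R : realFieldType) (f : pt R -> R) c (L : seq (pt R)) :
  (forall y, y \in L -> f y = c) -> \sum_(y <- L) f y = (size L)%:R * c.
Proof.
elim: L => [|a L IH] H; first by rewrite big_nil mul0r.
rewrite big_cons IH /=; last by move=> y yL; apply: H; rewrite in_cons yL orbT.
by rewrite H ?mem_head // mulrS; ring.
Qed.

Lemma le_bigmax0 (R : realFieldType) (f : pt R -> R) (L : seq (pt R)) y :
  y \in L -> f y <= \big[Num.max/0]_(x <- L) f x.
Proof.
elim: L => [|a L IH] //; rewrite in_cons big_cons => /orP [/eqP ->|yL].
  by rewrite le_max lexx.
by rewrite le_max IH ?orbT.
Qed.

Lemma bigmax0_le (R : realFieldType) (f : pt R -> R) (L : seq (pt R)) c :
  0 <= c -> (forall y, y \in L -> f y <= c) -> \big[Num.max/0]_(x <- L) f x <= c.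
Proof.
move=> c0; elim: L => [|a L IH] H; first by rewrite big_nil.
rewrite big_cons ge_max H ?mem_head //= IH // => y yL.
by apply: H; rewrite in_cons yL orbT.
Qed.

Lemma sqdist_ge0 (R : realFieldType) (p q : pt R) : 0 <= sqdist p q.
Proof. by rewrite /sqdist addr_ge0 // sqr_ge0. Qed.

Lemma sqdist_le0 (R : realFieldType) (p q : pt R) :
  sqdist p q <= 0 -> p.1 = q.1 /\ p.2 = q.2.
Proof.
rewrite /sqdist => h.
have h1 : (p.1 - q.1) ^+ 2 = 0.
  by apply/le_anti; rewrite sqr_ge0 andbT; have := sqr_ge0 (p.2 - q.2); lra.
have h2 : (p.2 - q.2) ^+ 2 = 0.
  by apply/le_anti; rewrite sqr_ge0 andbT; have := sqr_ge0 (p.1 - q.1); lra.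
move/eqP: h1; rewrite sqrf_eq0 subr_eq0 => /eqP ->.
by move/eqP: h2; rewrite sqrf_eq0 subr_eq0 => /eqP ->.
Qed.

Lemma sqdist_gt0 (R : realFieldType) (p q : pt R) : p != q -> 0 < sqdist p q.
Proof.
case: p q => [a b] [c d]; rewrite xpair_eqE negb_and /sqdist /= => h.
rewrite lt_neqAle addr_ge0 ?sqr_ge0 // andbT.
apply/eqP => /esym H.
have [] := @sqdist_le0 _ (a, b) (c, d); first by rewrite /sqdist /= H.
by move=> /= E1 E2; move: h; rewrite E1 E2 !eqxx.
Qed.

Theorem proposition4 (R : realType) (X : seq (pt R)) (w : pt R) :
  uniq X ->
  in_interior_conv X w ->
  on_fpvd X w ->
  exists X' : seq (pt R),
    X' != [::] /\
    (forall p : pt R, extreme_point X p <-> extreme_point X' p) /\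
    qmp_centre X' w.
Proof.
move=> _ [e [e0 He]] [x [y0 [xX _ _ Fx _]]].
set n := size X.
set D := sqdist w x.
have D0 : 0 <= D := @sqdist_ge0 _ _ _.
set SX1 := \sum_(y <- X) y.1.
set SX2 := \sum_(y <- X) y.2.
set v1 := (n%:R + 1) * w.1 - SX1 - x.1.
set v2 := (n%:R + 1) * w.2 - SX2 - x.2.
have [k [k0 [hkD hke]]] : exists k : nat, (0 < k)%N /\
    v1 ^+ 2 + v2 ^+ 2 <= k%:R * D /\ v1 ^+ 2 + v2 ^+ 2 < k%:R * e ^+ 2.
  have [Dpos|Dn] := boolP (0 < D).
    set m := Num.min D (e ^+ 2).
    have m0 : 0 < m by rewrite lt_min Dpos exprn_gt0.
    set c := (v1 ^+ 2 + v2 ^+ 2) / m.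
    have c0 : 0 <= c by rewrite divr_ge0 ?addr_ge0 ?sqr_ge0 // ltW.
    have hv : v1 ^+ 2 + v2 ^+ 2 = c * m by rewrite /c divfK // gt_eqF.
    have hc := archi_boundP c0.
    exists (Num.Def.archi_bound c).+1; split => //.
    have hmD : m <= D by rewrite ge_min lexx.
    have hme : m <= e ^+ 2 by rewrite ge_min lexx orbT.
    rewrite mulrS.
    set K := (Num.Def.archi_bound c)%:R in hc *.
    have K0 : 0 <= K by rewrite ler0n.
    have h1 : c * m < (1 + K) * m by rewrite ltr_pM2r //; lra.
    have h2 : (1 + K) * m <= (1 + K) * D by rewrite ler_wpM2l //; lra.
    have h3 : (1 + K) * m <= (1 + K) * e ^+ 2 by rewrite ler_wpM2l //; lra.
    rewrite hv; split; lra.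
  have D00 : D = 0 by apply/le_anti; rewrite D0 andbT leNgt.
  have Hy : forall y, y \in X -> w.1 = y.1 /\ w.2 = y.2.
    by move=> y yX; apply: sqdist_le0; rewrite -D00; apply: Fx.
  have [hx1 hx2] := Hy x xX.
  have hS1 : SX1 = n%:R * w.1.
    by apply: sum_const_in => y /Hy [-> _].
  have hS2 : SX2 = n%:R * w.2.
    by apply: sum_const_in => y /Hy [_ ->].
  have -> : v1 = 0 by rewrite /v1 hS1 -hx1; ring.
  have -> : v2 = 0 by rewrite /v2 hS2 -hx2; ring.
  exists 1%N; split => //; rewrite D00 mul1r expr0n /= addr0; split => //.
  by rewrite mul1r exprn_gt0.
set kR : R := k%:R.
have kR0 : 0 < kR by rewrite ltr0n.
have kR1 : 1 <= kR by rewrite ler1n.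
set z : pt R := (w.1 + v1 / kR, w.2 + v2 / kR).
have dz : sqdist w z * kR ^+ 2 = v1 ^+ 2 + v2 ^+ 2.
  by rewrite /sqdist /=; field; rewrite gt_eqF.
have t0 : 0 <= sqdist w z := @sqdist_ge0 _ _ _.
have dzD : sqdist w z <= D.
  have : sqdist w z * kR <= D.
    rewrite -(ler_pM2l kR0); rewrite -dz expr2 in hkD; lra.
  nra.
have dze : sqdist w z < e ^+ 2.
  have : sqdist w z * kR < e ^+ 2.
    rewrite -(ltr_pM2l kR0); rewrite -dz expr2 in hke; lra.
  nra.
have zc : in_conv X z := He z dze.
have hz1 : kR * z.1 = kR * w.1 + v1 by rewrite /z /=; field; rewrite gt_eqF.
have hz2 : kR * z.2 = kR * w.2 + v2 by rewrite /z /=; field; rewrite gt_eqF.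
clearbody z.
exists (ncons k z X); split; [|split].
- by rewrite -(prednK k0).
- by apply: extreme_eq => q; apply: iff_sym; apply: conv_ncons.
move=> s sw; rewrite /min_power.
have xX' : x \in ncons k z X by rewrite -cat_nseq mem_cat xX orbT.
have Mw : \big[Num.max/0]_(y <- ncons k z X) sqdist w y = D.
  apply/le_anti; rewrite (@le_bigmax0 _ (sqdist w) _ _ xX') andbT.
  apply: bigmax0_le => // y; rewrite -cat_nseq mem_cat mem_nseq.
  by case/orP => [/andP [_ /eqP ->] | yX] //; apply: Fx.
have Ms := @le_bigmax0 _ (sqdist s) _ _ xX'.
rewrite Mw; apply: lt_le_trans (lerD (lexx _) Ms).
have sw0 := @sqdist_gt0 _ _ _ sw.
rewrite !sum_sqdist !sum_ncons size_ncons natrD -/kR -/n /=.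
rewrite hz1 hz2 -/SX1 -/SX2.
have n0 : 0 <= n%:R :> R by rewrite ler0n.
have N0 : 0 < kR + n%:R + 1 by lra.
have := mulr_gt0 N0 sw0.
rewrite /v1 /v2 /D /sqdist; nra.
Qed.
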